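(* Let $G$ be a simple graph with $m \ge 1$ edges, let $\Delta_1 \ge \dots \ge \Delta_m$ be as defined below, and let $z$ be the unique real number with $1 \le z \le m$ satisfying \[ z(z-1) = \sum_{k=1}^{\lfloor z \rfloor} \Delta_k + (z - \lfloor z \rfloor)\,\Delta_{\lceil z \rceil}. \] Then $q(G) \le z + 1$, with equality when $G$ is regular.
   Context: $q(G)$ denotes the largest eigenvalue of the signless Laplacian $D + A$ of $G$. For each edge $uv$ of $G$ put $d_u + d_v - 2$ (the degree of $uv$ in the line graph of $G$), and let $\Delta_1 \ge \dots \ge \Delta_m$ be these $m$ numbers in non-increasing order. (The existence and uniqueness of $z$ is the Edwards–Elphick fact that for any graph on $N$ vertices with degrees $e_1\ge\dots\ge e_N$ the equation $y(y-1)=\sum_{k=1}^{\lfloor y\rfloor}e_k+(y-\lfloor y\rfloor)e_{\lceil y\rceil}$ has a unique solution in $[1,N]$, applied to the line graph.) *)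

(* Defs.v *)
From HB Require Import structures.
From mathcomp Require Import all_boot all_order all_algebra.
Set Implicit Arguments. Unset Strict Implicit. Unset Printing Implicit Defensive.
Import Order.TTheory GRing.Theory Num.Theory.

Definition simple_graph (n : nat) (e : rel 'I_n) : Prop :=
  (forall i j, e i j = e j i) /\ (forall i, ~~ e i i).

Definition deg (n : nat) (e : rel 'I_n) (i : 'I_n) : nat := #|[set j | e i j]|.

(* Edges, each unordered edge {i,j} represented once as (i,j) with i < j. *)
Definition edges (n : nat) (e : rel 'I_n) : {set 'I_n * 'I_n} :=
  [set p | e p.1 p.2 && (p.1 < p.2)%N].

Definition nedges (n : nat) (e : rel 'I_n) : nat := #|edges e|.

(* Edge degrees d_u + d_v - 2 sorted in non-increasing order:
   Delta_k = nth 0 (edge_degs e) k.-1  (1-based k). *)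
Definition edge_degs (n : nat) (e : rel 'I_n) : seq nat :=
  sort geq [seq (deg e p.1 + deg e p.2 - 2)%N | p <- enum (edges e)].

Definition regular (n : nat) (e : rel 'I_n) : Prop :=
  exists r, forall i, deg e i = r.

Local Open Scope ring_scope.

Definition signless_laplacian (R : rcfType) (n : nat) (e : rel 'I_n) : 'M[R]_n :=
  \matrix_(i, j) (if i == j then (deg e i)%:R else (e i j : nat)%:R).

Definition is_largest_eigenvalue (R : rcfType) (n : nat) (M : 'M[R]_n) (q : R) : Prop :=
  eigenvalue M q /\ (forall a, eigenvalue M a -> a <= q).

Definition is_floor (R : rcfType) (z : R) (k : nat) : Prop :=
  k%:R <= z < k.+1%:R.

Definition ceil_from_floor (R : rcfType) (z : R) (k : nat) : nat :=
  if z == k%:R then k else k.+1.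

Definition z_equation (R : rcfType) (D : seq nat) (z : R) : Prop :=
  exists k : nat, is_floor z k /\
    z * (z - 1) = \sum_(i < k) (nth 0%N D i)%:R
                  + (z - k%:R) * (nth 0%N D (ceil_from_floor z k).-1)%:R.

(* Main.v *)
Require Import Defs.
From HB Require Import structures.
From mathcomp Require Import all_boot all_order all_algebra.
From mathcomp Require Import ring lra zify.
Import Order.TTheory GRing.Theory Num.Theory.
Set Implicit Arguments. Unset Strict Implicit. Unset Printing Implicit Defensive.

Lemma D_anti (D : seq nat) : sorted geq D ->
  forall i j, (i <= j)%N -> (nth 0 D j <= nth 0 D i)%N.
Proof.
move=> sD i j lij.
have [ljs|lsj] := ltnP j (size D).
  have tr : transitive geq by move=> a b c /= h1 h2; exact: leq_trans h2 h1.
  have rf : reflexive geq by move=> a /=.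
  apply: (sorted_leq_nth tr rf 0 sD) => //.
  by rewrite inE (leq_ltn_trans lij ljs).
by rewrite nth_default.
Qed.

Lemma sum_trunc (D : seq nat) (k : nat) : sorted geq D ->
  (\sum_(x <- D) (x - nth 0 D k) = \sum_(i < k) (nth 0 D i - nth 0 D k))%N.
Proof.
move=> sD; set d := nth 0 D k.
rewrite (big_nth 0) /=.
set M := maxn k (size D).
have -> : (\sum_(0 <= i < size D) (nth 0 D i - d) = \sum_(0 <= i < M) (nth 0 D i - d))%N.
  rewrite [RHS](big_cat_nat (n := size D)) //=; last by rewrite /M; lia.
  rewrite [X in (_ = _ + X)%N]big1_seq ?addn0 //.
  move=> i /andP[_]; rewrite mem_index_iota => /andP[h _].
  by rewrite nth_default.
rewrite (big_cat_nat (n := k)) //=; last by rewrite /M; lia.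
rewrite [X in (_ + X)%N]big1_seq ?addn0 ?big_mkord //.
move=> i /andP[_]; rewrite mem_index_iota => /andP[h _].
apply/eqP; rewrite subn_eq0; exact: D_anti.
Qed.
Local Open Scope ring_scope.

Lemma pairs_edges (R : rcfType) (n : nat) (e : rel 'I_n) (f : 'I_n -> 'I_n -> R) :
  simple_graph e -> (forall u v, f u v = f v u) ->
  \sum_u \sum_(v | e u v) f u v = (\sum_(p in edges e) f p.1 p.2) *+ 2.
Proof.
move=> [esym eirr] fsym.
rewrite pair_big_dep /= (bigID (fun p : 'I_n * 'I_n => (p.1 < p.2)%N)) /= mulr2n.
congr (_ + _).
  by apply: eq_bigl => p; rewrite inE.
have swi : injective (fun p : 'I_n * 'I_n => (p.2, p.1)) by move=> [a b] [c d] /= [-> ->].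
rewrite (reindex_inj swi) /=.
apply: eq_big => [[a b]|[a b]] /=.
  rewrite inE /= esym.
  case eab: (e a b) => //=.
  have nab : a != b by apply: contraTneq eab => ->; exact: eirr.
  rewrite -leqNgt leq_eqVlt; case: ltngtP => //= h.
  by move: nab; rewrite (ord_inj h) eqxx.
by move=> _; rewrite fsym.
Qed.
Local Open Scope ring_scope.

Lemma degE (R : rcfType) (n : nat) (e : rel 'I_n) (u : 'I_n) :
  (deg e u)%:R = \sum_(i | e u i) (1 : R).
Proof.
rewrite /deg -sum1_card natr_sum.
by apply: eq_bigl => i; rewrite inE.
Qed.

Lemma vertex_eq (R : rcfType) (n : nat) (e : rel 'I_n) (x : 'rV[R]_n) (q : R) :
  simple_graph e -> x *m signless_laplacian R e = q *: x ->
  forall u, q * x ord0 u = \sum_(i | e u i) (x ord0 u + x ord0 i).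
Proof.
move=> [esym eirr] hx u.
have := congr1 (fun M : 'rV[R]_n => M ord0 u) hx; rewrite !mxE => <-.
rewrite big_split /=.
have -> : \sum_(i | e u i) x ord0 u = (deg e u)%:R * x ord0 u.
  by rewrite degE mulr_suml; apply: eq_bigr => *; rewrite mul1r.
have -> : \sum_j x ord0 j * signless_laplacian R e j u =
   \sum_j ((if j == u then x ord0 u * (deg e u)%:R else 0) + (if e u j then x ord0 j else 0)).
  apply: eq_bigr => j _; rewrite mxE.
  case: eqP => [->|/eqP nju]; first by rewrite (negbTE (eirr u)) addr0.
  rewrite add0r esym; case: (e u j); by rewrite ?mulr1 ?mulr0.
rewrite big_split /= -big_mkcond big_pred1_eq -big_mkcond /=.
by rewrite mulrC.
Qed.
Local Open Scope ring_scope.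

Definition Wf (R : rcfType) (n : nat) (e : rel 'I_n) (X : 'I_n -> R) (u : 'I_n) : R :=
  \sum_(i | e u i) `|X u + X i|.
Arguments Wf {R n}.

Lemma edge_decomp (R : rcfType) (n : nat) (e : rel 'I_n) (X : 'I_n -> R) (q : R) u v :
  simple_graph e -> (forall u, q * X u = \sum_(i | e u i) (X u + X i)) -> e u v ->
  exists S1 S2 A1 A2,
   [/\ q * (X u + X v) = (X u + X v) *+ 2 + S1 + S2,
       Wf e X u = `|X u + X v| + A1, Wf e X v = `|X u + X v| + A2,
       `|S1| <= A1 & `|S2| <= A2].
Proof.
move=> [esym eirr] hv euv.
have evu : e v u by rewrite esym.
exists (\sum_(i | e u i && (i != v)) (X u + X i)), (\sum_(i | e v i && (i != u)) (X v + X i)).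
exists (\sum_(i | e u i && (i != v)) `|X u + X i|), (\sum_(i | e v i && (i != u)) `|X v + X i|).
split.
- rewrite mulrDr !hv [\sum_(i | e v i) _](bigD1 u) //= [\sum_(i | e u i) _](bigD1 v) //= mulr2n; ring.
- by rewrite /Wf (bigD1 v) //=.
- by rewrite /Wf (bigD1 u) //= [X v + X u]addrC.
- exact: ler_norm_sum.
- exact: ler_norm_sum.
Qed.

Lemma two_le_sum (R : rcfType) (n : nat) (F : 'I_n -> R) u v :
  (forall i, 0 <= F i) -> u != v -> F u + F v <= \sum_i F i.
Proof.
move=> F0 uv.
rewrite (bigD1 u) //= (bigD1 v) 1?eq_sym //= addrA lerDl.
by apply: sumr_ge0 => i _.
Qed.

Lemma W_bound (R : rcfType) (n : nat) (e : rel 'I_n) (X : 'I_n -> R) u v :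
  simple_graph e -> e u v ->
  (Wf e X u + Wf e X v - `|X u + X v|) *+ 2 <= \sum_a Wf e X a.
Proof.
move=> [esym eirr] euv.
have uv : u != v by apply: contraTneq euv => ->; exact: eirr.
pose phi a := (if e a u then `|X a + X u| else 0) + (if e a v then `|X a + X v| else 0).
have Wphi a : phi a <= Wf e X a.
  rewrite /Wf big_mkcond /=.
  apply: (@two_le_sum R n (fun i => if e a i then `|X a + X i| else 0)) => // i.
  by case: ifP.
have sphi : \sum_a phi a = Wf e X u + Wf e X v.
  rewrite big_split /= /Wf !big_mkcond /=.
  congr (_ + _); rewrite [RHS]big_mkcond; apply: eq_bigr => a _; rewrite esym; by case: ifP; rewrite // addrC.
have phiu : phi u = `|X u + X v|.
  by rewrite /phi (negbTE (eirr u)) add0r euv.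
have phiv : phi v = `|X u + X v|.
  by rewrite /phi (negbTE (eirr v)) addr0 esym euv addrC.
have : (Wf e X u - phi u) + (Wf e X v - phi v) <= \sum_a (Wf e X a - phi a).
  apply: (@two_le_sum R n (fun a => Wf e X a - phi a)) => // a.
  by rewrite subr_ge0.
rewrite sumrB sphi phiu phiv => h.
lra.
Qed.
Local Open Scope ring_scope.

Lemma deg_ge1 (n : nat) (e : rel 'I_n) u v : e u v -> (1 <= deg e u)%N.
Proof. by move=> euv; rewrite /deg card_gt0; apply/set0Pn; exists v; rewrite inE. Qed.

Lemma lamT (R : rcfType) (n : nat) (e : rel 'I_n) (X : 'I_n -> R) (q : R) :
  simple_graph e -> (forall u, q * X u = \sum_(i | e u i) (X u + X i)) -> 2 <= q ->
  (q - 2) * \sum_u \sum_(v | e u v) `|X u + X v|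
   <= \sum_u \sum_(v | e u v) ((deg e u + deg e v - 2)%N)%:R * `|X u + X v|.
Proof.
move=> sg hv q2; have [esym eirr] := sg.
rewrite mulr_sumr.
have step : \sum_u (q - 2) * (\sum_(v | e u v) `|X u + X v|) <=
   \sum_u \sum_(v | e u v) (Wf e X u + Wf e X v - `|X u + X v| *+ 2).
  apply: ler_sum => u _; rewrite mulr_sumr; apply: ler_sum => v euv.
  have [S1 [S2 [A1 [A2 [h1 h2 h3 h4 h5]]]]] := edge_decomp sg hv euv.
  have -> : (q - 2) * `|X u + X v| = `|S1 + S2|.
    rewrite -[q - 2]ger0_norm ?subr_ge0 // -normrM; congr `|_|.
    rewrite mulrBl h1 mulr2n; ring.
  rewrite h2 h3 mulr2n.
  have := ler_normD S1 S2; lra.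
apply: (le_trans step) => {step}.
rewrite le_eqVlt; apply/orP; left; apply/eqP.
have E1 : \sum_u \sum_(v | e u v) Wf e X u = \sum_u \sum_(v | e u v) (deg e u)%:R * `|X u + X v|.
  apply: eq_bigr => u _.
  rewrite -mulr_sumr degE mulr_suml /Wf; apply: eq_bigr => v _; by rewrite mul1r.
have E2 : \sum_u \sum_(v | e u v) Wf e X v = \sum_u \sum_(v | e u v) (deg e v)%:R * `|X u + X v|.
  rewrite (eq_bigr (fun u => \sum_v (if e u v then Wf e X v else 0))); last first.
    by move=> u _; rewrite big_mkcond.
  rewrite exchange_big /=.
  rewrite [RHS](eq_bigr (fun u => \sum_v (if e u v then (deg e v)%:R * `|X u + X v| else 0))); last first.
    by move=> u _; rewrite big_mkcond.
  rewrite [RHS]exchange_big /=.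
  apply: eq_bigr => v _.
  rewrite -big_mkcond -[RHS]big_mkcond /=.
  rewrite (eq_bigl (fun u => e v u)); last by move=> u; rewrite esym.
  rewrite [RHS](eq_bigl (fun u => e v u)); last by move=> u; rewrite esym.
  have -> : \sum_(u | e v u) Wf e X v = (deg e v)%:R * Wf e X v.
    by rewrite degE mulr_suml; apply: eq_bigr => *; rewrite mul1r.
  rewrite -mulr_sumr /Wf; congr (_ * _).
  by apply: eq_bigr => u _; rewrite addrC.
have E3 : forall u v, e u v -> ((deg e u + deg e v - 2)%N)%:R * `|X u + X v|
       = (deg e u)%:R * `|X u + X v| + (deg e v)%:R * `|X u + X v| - `|X u + X v| *+ 2 :> R.
  move=> u v euv; rewrite natrB; last first.
    have h1 := deg_ge1 euv; have h2 := @deg_ge1 _ e v u; rewrite esym in h2; have := h2 euv; lia.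
  rewrite natrD mulr2n; ring.
rewrite [RHS](eq_bigr (fun u => \sum_(v | e u v) ((deg e u)%:R * `|X u + X v| + (deg e v)%:R * `|X u + X v| - `|X u + X v| *+ 2))); last first.
  by move=> u _; apply: eq_bigr => v euv; rewrite E3.
have split3 : forall (F G H : 'I_n -> 'I_n -> R),
   \sum_u \sum_(v | e u v) (F u v + G u v - H u v) =
   \sum_u \sum_(v | e u v) F u v + \sum_u \sum_(v | e u v) G u v - \sum_u \sum_(v | e u v) H u v.
  move=> F G H; rewrite -big_split -sumrB; apply: eq_bigr => u _ /=.
  by rewrite -big_split -sumrB.
rewrite (split3 (fun u v => Wf e X u) (fun u v => Wf e X v) (fun u v => `|X u + X v| *+ 2)).
rewrite (split3 (fun u v => (deg e u)%:R * `|X u + X v|) (fun u v => (deg e v)%:R * `|X u + X v|) (fun u v => `|X u + X v| *+ 2)).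
by rewrite E1 E2.
Qed.
Local Open Scope ring_scope.

Lemma edge_bound (R : rcfType) (n : nat) (e : rel 'I_n) (X : 'I_n -> R) (q : R) u v :
  simple_graph e -> (forall u, q * X u = \sum_(i | e u i) (X u + X i)) -> 1 <= q ->
  e u v -> ((q - 1) * `|X u + X v|) *+ 2 <= \sum_a Wf e X a.
Proof.
move=> sg hv q1 euv.
apply: le_trans (W_bound X sg euv).
rewrite lerMn2r /=.
have [S1 [S2 [A1 [A2 [h1 h2 h3 h4 h5]]]]] := edge_decomp sg hv euv.
have -> : (q - 1) * `|X u + X v| = `|X u + X v + S1 + S2|.
  rewrite -[q - 1]ger0_norm ?subr_ge0 // -normrM; congr `|_|.
  rewrite mulrBl h1 mulr2n; ring.
rewrite h2 h3.
have := ler_normD (X u + X v + S1) S2; have := ler_normD (X u + X v) S1; lra.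
Qed.

Lemma sorted_D (n : nat) (e : rel 'I_n) : sorted geq (edge_degs e).
Proof. by apply: sort_sorted => a b; apply: leq_total. Qed.

Lemma knap (R : rcfType) (n : nat) (e : rel 'I_n) (k : nat) :
  let D := edge_degs e in let d := nth 0%N D k in
  \sum_(p in edges e) (((deg e p.1 + deg e p.2 - 2) - d)%N)%:R
   = \sum_(i < k) (nth 0%N D i)%:R - k%:R * d%:R :> R.
Proof.
move=> D d.
rewrite -natr_sum -big_enum /=.
rewrite -(big_map (fun p : 'I_n * 'I_n => (deg e p.1 + deg e p.2 - 2)%N) xpredT (fun x => (x - d)%N)).
rewrite -(perm_big _ (permEl (perm_sort geq _))) -/(edge_degs e) -/D.
rewrite sum_trunc; last exact: sorted_D.
rewrite natr_sum (eq_bigr (fun i : 'I_k => (nth 0%N D i)%:R - d%:R)); last first.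
  move=> i _; rewrite natrB //; apply: D_anti; [exact: sorted_D | exact: ltnW].
by rewrite sumrB sumr_const card_ord mulr_natl.
Qed.
Local Open Scope ring_scope.

Lemma upper (R : rcfType) (n : nat) (e : rel 'I_n) (x : 'rV[R]_n) (q z : R) :
  simple_graph e -> x *m signless_laplacian R e = q *: x -> x != 0 -> 1 <= z ->
  z_equation (edge_degs e) z -> q <= z + 1.
Proof.
move=> sg hx xn0 z1 [k [_ hz]].
have [esym eirr] := sg.
pose X : 'I_n -> R := fun i => x ord0 i.
have hv : forall u, q * X u = \sum_(i | e u i) (X u + X i) := vertex_eq sg hx.
have [q2|q2] := ltP q 2; first lra.
have q1pos : 0 < q - 1 by lra.
set D := edge_degs e; set d := nth 0%N D k.
have hz' : z * (z - 1) = \sum_(i < k) (nth 0%N D i)%:R + (z - k%:R) * d%:R.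
  move: hz; rewrite /ceil_from_floor; case: eqP => [->|_] //.
  by rewrite subrr !mul0r.
pose K : R := \sum_(i < k) (nth 0%N D i)%:R - k%:R * d%:R.
have K0 : 0 <= K.
  rewrite /K -(knap R e k); apply: sumr_ge0 => p _; exact: ler0n.
pose Dl := fun p : 'I_n * 'I_n => (deg e p.1 + deg e p.2 - 2)%N.
pose s : R := \sum_(p in edges e) `|X p.1 + X p.2|.
have hT : \sum_a Wf e X a = s *+ 2.
  rewrite /Wf (pairs_edges (f := fun u v => `|X u + X v|)) // => u v; by rewrite addrC.
have hlam : (q - 2) * s <= \sum_(p in edges e) (Dl p)%:R * `|X p.1 + X p.2|.
  have := lamT sg hv q2.
  rewrite (pairs_edges (f := fun u v => `|X u + X v|)) //; last by move=> u v; rewrite addrC.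
  rewrite (pairs_edges (f := fun u v => ((deg e u + deg e v - 2)%N)%:R * `|X u + X v|)) //; last first.
    by move=> u v; rewrite addnC addrC.
  by rewrite mulrnAr lerMn2r.
have hb : forall p, p \in edges e -> (q - 1) * `|X p.1 + X p.2| <= s.
  move=> [u v]; rewrite inE /= => /andP[euv _].
  have := edge_bound sg hv _ euv; rewrite hT lerMn2r /=; apply; lra.
have s0 : 0 <= s by apply: sumr_ge0 => *.
have [sz|sp] := eqVneq s 0.
  exfalso.
  have qX : forall u, q * X u = 0.
    move=> u; apply/normr0_eq0; apply/eqP; rewrite eq_le normr_ge0 andbT.
    have W0 : Wf e X u <= 0.
      rewrite -(mul0rn _ 2) -sz -hT (bigD1 u) //= lerDl; apply: sumr_ge0 => a _.
      by apply: sumr_ge0.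
    apply: le_trans W0; rewrite (hv u); exact: ler_norm_sum.
  have : x = 0.
    apply/matrixP => i j; rewrite (ord1 i) mxE.
    have := qX j; move/eqP; rewrite mulf_eq0 => /orP[/eqP q0|/eqP //]; lra.
  by move/eqP: xn0.
have spos : 0 < s by rewrite lt_def sp s0.
pose c : R := s / (q - 1).
have hknap : \sum_(p in edges e) (Dl p)%:R * `|X p.1 + X p.2|
     <= d%:R * s + c * \sum_(p in edges e) ((Dl p - d)%N)%:R.
  rewrite mulr_sumr /s mulr_sumr -big_split /=.
  apply: ler_sum => p hp.
  have w0 : 0 <= `|X p.1 + X p.2| by [].
  have wc : `|X p.1 + X p.2| <= c.
    rewrite /c ler_pdivlMr; last lra.
    by rewrite mulrC; apply: hb.
  have [le|lt] := leqP (Dl p) d.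
    have -> : (Dl p - d)%N = 0%N by apply/eqP; rewrite subn_eq0.
    have : (Dl p)%:R <= d%:R :> R by rewrite ler_nat.
    rewrite mulr0 addr0; move=> h; exact: ler_wpM2r.
  rewrite (@natrB R (Dl p) d (ltnW lt)).
  have : d%:R <= (Dl p)%:R :> R by rewrite ler_nat (ltnW lt).
  move=> h; nra.
have hK : \sum_(p in edges e) ((Dl p - d)%N)%:R = K :> R by rewrite /K -knap.
rewrite hK in hknap.
have h1 : (q - 2) * s <= d%:R * s + c * K by apply: le_trans hknap.
have cq : c * (q - 1) = s by rewrite /c divfK // gt_eqF.
have h2 : (q - 2) * (q - 1) <= d%:R * (q - 1) + K.
  have h1' : (q - 2) * s * (q - 1) <= (d%:R * s + c * K) * (q - 1).
    by rewrite ler_pM2r //; lra.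
  have e1 : (d%:R * s + c * K) * (q - 1) = s * (d%:R * (q - 1) + K).
    rewrite -cq; ring.
  have e2 : (q - 2) * s * (q - 1) = s * ((q - 2) * (q - 1)) by ring.
  by move: h1'; rewrite e1 e2 ler_pM2l.
have hdz : d%:R <= z - 1.
  have : z * (z - 1) = K + z * d%:R by rewrite hz' /K; ring.
  nra.
have hzK : z * (z - 1) = K + z * d%:R by rewrite hz' /K; ring.
rewrite leNgt; apply/negP => hlt.
have a1 : 0 <= (q - 1 - z) * (z - 1 - d%:R) by apply: mulr_ge0; lra.
have a2 : 0 < (q - 1) * (q - 1 - z) by apply: mulr_gt0; lra.
clear -h2 hzK hdz a1 a2 hlt; nra.
Qed.
Local Open Scope ring_scope.

Lemma reg_D (n : nat) (e : rel 'I_n) r : (forall i, deg e i = r) ->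
  size (edge_degs e) = nedges e /\
  forall i, (i < size (edge_degs e))%N -> nth 0%N (edge_degs e) i = (r + r - 2)%N.
Proof.
move=> hr; split.
  by rewrite /edge_degs size_sort size_map /nedges cardE.
move=> i hi; have := mem_nth 0%N hi.
rewrite /edge_degs mem_sort => /mapP[p _ ->].
by rewrite !hr.
Qed.

Lemma reg_eig (R : rcfType) (n : nat) (e : rel 'I_n) r : simple_graph e ->
  (forall i, deg e i = r) ->
  const_mx 1 *m signless_laplacian R e = (r + r)%N%:R *: (const_mx 1 : 'rV[R]_n).
Proof.
move=> [esym eirr] hr; apply/matrixP => i j; rewrite !mxE mulr1.
have -> : \sum_j0 const_mx (1 : R) i j0 * signless_laplacian R e j0 j =
   \sum_j0 ((if j0 == j then (deg e j)%:R else 0) + (if e j j0 then 1 else 0)).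
  apply: eq_bigr => l _; rewrite !mxE mul1r.
  case: eqP => [->|/eqP nlj]; first by rewrite (negbTE (eirr j)) addr0.
  rewrite add0r esym; by case: (e j l).
rewrite big_split /= -big_mkcond big_pred1_eq -big_mkcond /= -degE hr.
by rewrite natrD.
Qed.
Unset Implicit Arguments.
Local Open Scope ring_scope.

Theorem mainTheorem5 (R : rcfType) (n : nat) (e : rel 'I_n) (z q : R) :
  simple_graph e ->
  (1 <= nedges e)%N ->
  1 <= z -> z <= (nedges e)%:R ->
  z_equation (edge_degs e) z ->
  is_largest_eigenvalue (signless_laplacian R e) q ->
  q <= z + 1 /\ (regular e -> q = z + 1).
Proof.
move=> sg m1 z1 zm hzeq [hq qmax].
have [v hv vn0] := eigenvalueP hq.
have up := upper sg hv vn0 z1 hzeq.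
split => // -[r hr].
apply/eqP; rewrite eq_le up /=.
have /set0Pn [p pe] : edges e != set0 by rewrite -card_gt0.
have r1 : (1 <= r)%N.
  move: pe; rewrite inE => /andP[euv _]; rewrite -(hr p.1); exact: deg_ge1 euv.
have q2r : (r + r)%N%:R <= q.
  apply: qmax; apply/eigenvalueP; exists (const_mx 1); first exact: reg_eig.
  apply/eqP => /matrixP /(_ ord0 p.1); rewrite !mxE => /eqP; by rewrite oner_eq0.
have [sD allD] := reg_D hr.
move: hzeq => [k [/andP[kz zk] hz]].
have km : (k <= nedges e)%N by rewrite -(ler_nat R); apply: le_trans kz zm.
have Sk : \sum_(i < k) (nth 0%N (edge_degs e) i)%:R = k%:R * (r + r - 2)%N%:R :> R.
  rewrite (eq_bigr (fun _ => (r + r - 2)%N%:R)); last first.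
    move=> i _; rewrite allD // sD; exact: leq_trans (ltn_ord i) km.
  by rewrite sumr_const card_ord mulr_natl.
have T : (z - k%:R) * (nth 0%N (edge_degs e) (ceil_from_floor z k).-1)%:R
       = (z - k%:R) * (r + r - 2)%N%:R :> R.
  rewrite /ceil_from_floor; case: eqP => [->|nz]; first by rewrite subrr !mul0r.
  rewrite /= allD // sD.
  have : k%:R < z by rewrite lt_def kz andbT; apply/eqP => h; apply: nz.
  move=> h; rewrite -(ltr_nat R); apply: lt_le_trans h zm.
rewrite Sk T in hz; clear -hz z1 q2r r1.
move: hz q2r; rewrite natrB ?natrD; last lia.
move=> h1 h2.
have : z - 1 = r%:R + r%:R - 2.
  apply: (@mulfI _ z); first by apply/eqP => h; move: z1; rewrite h; lra.
  rewrite h1; ring.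
lra.
Qed.
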